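(* Fix $\delta>0$. If $p=p(n)=\omega(n^{-1})$ and $G\sim G(n,p)$, then asymptotically almost surely, for every two disjoint vertex sets $X,Y\subseteq[n]$ with $|X|,|Y|\ge\delta n$, $G$ contains a matching of at least $\delta n/2$ edges each joining a vertex of $X$ to a vertex of $Y$.
   Context: $G(n,p)$ is the Erdős–Rényi random graph on $[n]$ with each edge present independently with probability $p$. ''Asymptotically almost surely'' means with probability tending to $1$ as $n\to\infty$. *)

(* Defs.v *)
From HB Require Import structures.
From mathcomp Require Import all_boot all_order all_algebra.
From mathcomp Require Import all_classical all_reals all_analysis.
Set Implicit Arguments. Unset Strict Implicit. Unset Printing Implicit Defensive.
Import Order.TTheory GRing.Theory Num.Theory.
Local Open Scope ring_scope.

(* A graph on [n] = 'I_n is identified with its edge set, a set of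
   2-element subsets of 'I_n. *)
Definition pairs (n : nat) : {set {set 'I_n}} := [set e : {set 'I_n} | #|e| == 2%N].

(* Probability of the event A under G(n,p): each of the #|pairs n| possible
   edges is present independently with probability p. *)
Definition gnp_prob (R : realType) (n : nat) (p : R)
    (A : pred {set {set 'I_n}}) : R :=
  \sum_(E in powerset (pairs n) | A E)
     p ^+ #|E| * (1 - p) ^+ (#|pairs n| - #|E|).

Definition XY_matching (n : nat) (E : {set {set 'I_n}}) (X Y : {set 'I_n})
    (M : {set {set 'I_n}}) : bool :=
  [&& M \subset E,
      [forall e in M, exists x in X, exists y in Y, e == [set x; y]] &
      [forall e in M, forall f in M, (e != f) ==> [disjoint e & f]]].

Definition matching_event (R : realType) (delta : R) (n : nat)
    : pred {set {set 'I_n}} :=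
  fun E => [forall X : {set 'I_n}, forall Y : {set 'I_n},
    ([disjoint X & Y] && (delta * n%:R <= #|X|%:R) && (delta * n%:R <= #|Y|%:R))
    ==> [exists M : {set {set 'I_n}},
          XY_matching E X Y M && (delta * n%:R / 2 <= #|M|%:R)]].

(* Main.v *)
Require Import Defs.
From HB Require Import structures.
From mathcomp Require Import all_boot all_order all_algebra.
From mathcomp Require Import all_classical all_reals all_analysis.
Import Order.TTheory GRing.Theory Num.Theory.
Import numFieldNormedType.Exports.
Local Open Scope classical_set_scope.
Local Open Scope ring_scope.
Local Close Scope classical_set_scope.

Lemma prod_powerset (T : finType) (R : realType) (a b : T -> R) (n : nat) :
  forall S : {set T}, #|S| = n ->
  \sum_(E in powerset S) ((\prod_(x in E) a x) * \prod_(x in S :\: E) b x)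
  = \prod_(x in S) (a x + b x).
Proof.
elim: n => [|n IH] S hS.
  move/eqP: hS; rewrite cards_eq0 => /eqP ->.
  by rewrite powerset0 big_set1 !big_set0 finset.setD0 big_set0 mulr1.
have [x xS] : exists x, x \in S.
  by apply/set0Pn; rewrite -card_gt0 hS.
have hS' : #|S :\ x| = n by move: hS; rewrite (cardsD1 x S) xS => -[].
rewrite (big_setD1 x xS) /= -(IH _ hS') mulr_sumr.
rewrite [LHS](bigID (fun E : {set T} => x \in E)) /=.
under [RHS]eq_bigr do rewrite mulrDl.
rewrite big_split /=.
congr (_ + _).
- rewrite (reindex_onto (fun E => x |: E) (fun E => E :\ x)) /=; last first.
    by move=> E /andP[_ xE]; rewrite finset.setD1K.
  apply: eq_big => [j|j].
    rewrite !powersetE setU11 andbT subsetD1 finset.subUset finset.sub1set xS /=.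
    case xj: (x \in j).
      rewrite /= andbF; apply/negbTE/negP => /andP[_ /eqP h]; move: xj; rewrite -h !inE eqxx //.
    by rewrite finset.setU1K ?xj // eqxx andbT.
  move=> /andP[_ /eqP h]; have xj : x \notin j by rewrite -h !inE eqxx.
  rewrite big_setU1 //= mulrA; congr (_ * _).
  apply: eq_bigl => y; rewrite !inE negb_or andbCA andbA; done.
- apply: eq_big => [j|j].
    by rewrite !powersetE subsetD1.
  move=> /andP[_ xj].
  rewrite mulrCA; congr (_ * _).
  have xSj : x \in S :\: j by rewrite inE xj xS.
  rewrite (big_setD1 x xSj); congr (_ * _).
  apply: eq_bigl => y; rewrite !inE andbCA; done.
Qed.
Lemma gnp_avoid (R : realType) (n : nat) (p : R) (F : {set {set 'I_n}}) :
  @gnp_prob R n p (fun E => [disjoint E & F]) = (1 - p) ^+ #|pairs n :&: F|.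
Proof.
rewrite /gnp_prob; set S := pairs n.
transitivity (\sum_(E in powerset S)
   ((\prod_(x in E) (if x \in F then 0 else p)) * \prod_(x in S :\: E) (1 - p))).
  rewrite big_mkcondr /=; apply: eq_bigr => E; rewrite powersetE => ES.
  case: ifP => hd.
    rewrite (eq_bigr (fun _ => p)); last first.
      by move=> x xE; rewrite (disjointFr hd xE).
    rewrite !prodr_const cardsD (finset.setIidPr ES) //.
  move/negbT: hd; rewrite -setI_eq0 => /set0Pn [x]; rewrite inE => /andP[xE xF].
  by rewrite (bigD1 x) //= xF mul0r mul0r.
rewrite (prod_powerset _ _ _ _ _ _ (erefl #|S|)).
rewrite (eq_bigr (fun x => if x \in F then 1 - p else 1)); last first.
  by move=> x _; case: ifP => _; rewrite ?add0r ?subrKC // addrC subrK.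
rewrite -big_mkcondr /= -prodr_const; apply: eq_bigl => x; rewrite [in RHS]inE //.
Qed.
Lemma disjP (T : finType) (A B : {set T}) :
  reflect (forall x, x \in A -> x \in B -> False) [disjoint A & B].
Proof.
apply: (iffP idP) => [d x xA xB | h].
  by rewrite (disjointFr d xA) in xB.
rewrite -setI_eq0; apply/eqP/setP => x; rewrite !inE; apply/negP => /andP[].
exact: h.
Qed.
Definition FAB (n : nat) (A B : {set 'I_n}) : {set {set 'I_n}} :=
  [set [set u.1; u.2] | u in finset.setX A B].

Lemma cover_inter (n : nat) (X Y : {set 'I_n}) (M : {set {set 'I_n}}) :
  [disjoint X & Y] ->
  [forall e in M, exists x in X, exists y in Y, e == [set x; y]] ->
  (#|X :&: finset.cover M| <= #|M|)%N.
Proof.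
move=> dXY /forall_inP fM.
set P := [set X :&: e | e in M].
have s1 : X :&: finset.cover M \subset finset.cover P.
  apply/fintype.subsetP => z; rewrite inE => /andP[zX /bigcupP [e eM ze]].
  apply/bigcupP; exists (X :&: e); first exact: imset_f.
  by rewrite inE zX ze.
apply: leq_trans (subset_leq_card s1) _.
apply: leq_trans (leq_card_cover P).1 _.
apply: leq_trans (leq_imset_card (fun e => X :&: e) M).
rewrite -sum1_card; apply: leq_sum => A /imsetP [e eM ->].
have /exists_inP [x xX /exists_inP [y yY /eqP ->]] := fM e eM.
rewrite -(cards1 x); apply: subset_leq_card; apply/fintype.subsetP => z.
rewrite !inE => /andP[zX /orP[//|/eqP zy]].
by move: zX; rewrite zy (disjointFl dXY yY).
Qed.
From mathcomp Require Import ring lra.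
Lemma comb (R : realType) (delta : R) (n : nat) (E : {set {set 'I_n}}) :
  ~~ @matching_event R delta n E ->
  exists u : {set 'I_n} * {set 'I_n},
    [&& [disjoint u.1 & u.2], delta * n%:R / 2 < #|u.1|%:R,
        delta * n%:R / 2 < #|u.2|%:R & [disjoint E & FAB n u.1 u.2]].
Proof.
move=> /forallPn [X] /forallPn [Y]; rewrite negb_imply.
move=> /andP[/andP[/andP[dXY hX] hY] /existsPn noM].
have m0 : XY_matching E X Y finset.set0.
  rewrite /XY_matching finset.sub0set /=; apply/andP; split; apply/forall_inP => e; rewrite inE //.
case: (arg_maxnP (fun M : {set {set 'I_n}} => #|M|) m0) => M mM maxM.
have hM : #|M|%:R < delta * n%:R / 2.
  by move: (noM M); rewrite mM /= -ltNge.
set C := finset.cover M.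
exists (X :\: C, Y :\: C) => /=.
move: (mM) => /and3P [sME fM dM].
have hXC := @cover_inter n X Y M dXY fM.
have dYX : [disjoint Y & X] by rewrite disjoint_sym.
have hYC : (#|Y :&: C| <= #|M|)%N.
  apply: (@cover_inter n Y X M dYX); apply/forall_inP => e eM.
  move/forall_inP: fM => /(_ e eM) /exists_inP [x xX /exists_inP [y yY /eqP ->]].
  by apply/exists_inP; exists y => //; apply/exists_inP; exists x => //; rewrite finset.setUC.
apply/and4P; split.
- apply/disjP => z; rewrite !inE => /andP[_ zX] /andP[_ zY].
  by move: zY; rewrite (disjointFr dXY zX).
- have := cardsID C X; move/(congr1 (fun k => k%:R : R)); rewrite natrD => hsum.
  have : (#|X :&: C|%:R <= #|M|%:R :> R) by rewrite ler_nat.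
  lra.
- have := cardsID C Y; move/(congr1 (fun k => k%:R : R)); rewrite natrD => hsum.
  have : (#|Y :&: C|%:R <= #|M|%:R :> R) by rewrite ler_nat.
  lra.
apply/disjP => f fE /imsetP [[a b] /finset.setXP [aA bB] fab]; rewrite {f}fab /= in fE.
move: aA bB; rewrite !inE => /andP[aC aX] /andP[bC bY].
have notinC : forall e, e \in M -> [disjoint [set a; b] & e].
  move=> e eM; apply/disjP => z; rewrite !inE => /orP[/eqP->|/eqP->] ze.
    by move/negP: aC; apply; apply/bigcupP; exists e.
  by move/negP: bC; apply; apply/bigcupP; exists e.
have abM : [set a; b] \notin M.
  apply/negP => abM; move/negP: aC; apply; apply/bigcupP; exists [set a; b] => //.
  by rewrite !inE eqxx.
have mM' : XY_matching E X Y ([set a; b] |: M).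
  rewrite /XY_matching finset.subUset finset.sub1set fE sME /=.
  apply/andP; split.
    apply/forall_inP => e; rewrite in_setU1 => /predU1P [->|eM].
      by apply/exists_inP; exists a => //; apply/exists_inP; exists b.
    by move/forall_inP: fM; apply.
  apply/forall_inP => e; rewrite in_setU1 => /predU1P [->|eM];
  apply/forall_inP => g; rewrite in_setU1 => /predU1P [->|gM]; apply/implyP => neq.
  - by rewrite eqxx in neq.
  - exact: notinC.
  - by rewrite disjoint_sym; apply: notinC.
  - by move/forall_inP: dM => /(_ e eM) /forall_inP /(_ g gM) /implyP; apply.
have := maxM _ mM'; rewrite cardsU1 abM /=.
by rewrite add1n ltnn.
Qed.
Lemma FAB_card (n : nat) (A B : {set 'I_n}) : [disjoint A & B] ->
  #|pairs n :&: FAB n A B| = (#|A| * #|B|)%N.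
Proof.
move=> dAB.
have sub : FAB n A B \subset pairs n.
  apply/fintype.subsetP => f /imsetP [[a b] /finset.setXP [aA bB] ->] /=.
  have ab : a != b by apply/eqP => ab; move: bB; rewrite -ab (disjointFr dAB aA).
  by rewrite inE cards2 ab.
rewrite (finset.setIidPr sub) /FAB card_in_imset ?cardsX //.
move=> [a b] [a' b'] /finset.setXP [aA bB] /finset.setXP [aA' bB'] /= h.
have ha : a \in [set a'; b'] by rewrite -h !inE eqxx.
have hb : b \in [set a'; b'] by rewrite -h !inE eqxx orbT.
move: ha hb; rewrite !inE => /orP [/eqP ea|/eqP ea]; last first.
  by move: bB'; rewrite -ea (disjointFr dAB aA).
move=> /orP [/eqP eb|/eqP eb]; last by rewrite ea eb.
by move: bB; rewrite eb (disjointFr dAB aA').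
Qed.
Lemma key (R : realType) (delta : R) (p : R) (n : nat) (hdelta : 0 < delta)
  (hp : 0 <= p <= 1) (hpn : 16 / delta ^+ 2 <= n%:R * p) :
  0 <= 1 - @gnp_prob R n p (@matching_event R delta n) <= (4/5) ^+ n.
Proof.
set S := pairs n.
set good := @matching_event R delta n.
set w := fun E : {set {set 'I_n}} => p ^+ #|E| * (1 - p) ^+ (#|S| - #|E|).
have hp1 : 0 <= 1 - p by case/andP: hp => _ h; rewrite subr_ge0.
have hp0 : 0 <= p by case/andP: hp.
have w0 : forall E, 0 <= w E by move=> E; rewrite /w mulr_ge0 // exprn_ge0.
have tot : \sum_(E in powerset S) w E = 1.
  have := @gnp_avoid R n p finset.set0; rewrite finset.setI0 cards0 expr0 => <-.
  rewrite /gnp_prob; apply: eq_bigl => E.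
  rewrite (_ : [disjoint E & finset.set0] = true) ?andbT //.
  by apply/disjP => x _; rewrite inE.
rewrite (bigID good) /= in tot.
have -> : 1 - @gnp_prob R n p good = \sum_(E in powerset S | ~~ good E) w E.
  by rewrite -tot /gnp_prob addrC addrK.
apply/andP; split; first by apply: sumr_ge0 => E _.
set cond := fun u : {set 'I_n} * {set 'I_n} =>
  [&& [disjoint u.1 & u.2], delta * n%:R / 2 < #|u.1|%:R & delta * n%:R / 2 < #|u.2|%:R].
set c := expR (- (p * (delta * n%:R / 2) ^+ 2)).
have c0 : 0 <= c by apply: expR_ge0.
have step1 : \sum_(E in powerset S | ~~ good E) w E <=
    \sum_(u : {set 'I_n} * {set 'I_n}) c.
  apply: (@le_trans _ _ (\sum_(E in powerset S) \sum_(u : {set 'I_n} * {set 'I_n})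
        (if cond u && [disjoint E & FAB n u.1 u.2] then w E else 0))).
    rewrite big_mkcondr /=; apply: ler_sum => E _.
    case: ifP => hg; last by apply: sumr_ge0 => u _; case: ifP.
    have [u hu] := @comb R delta n E hg.
    rewrite (bigD1 u) //= (_ : cond u && _ = true); last first.
      by move: hu => /and4P [h1 h2 h3 h4]; rewrite /cond h1 h2 h3 h4.
    by rewrite lerDl; apply: sumr_ge0 => v _; case: ifP.
  rewrite exchange_big /=; apply: ler_sum => u _.
  case hc: (cond u) => /=; last by rewrite big1.
  rewrite -big_mkcondr /=.
  have := @gnp_avoid R n p (FAB n u.1 u.2); rewrite /gnp_prob => ->.
  move: hc => /and3P [d1 h1 h2].
  rewrite FAB_card //.
  apply: (@le_trans _ _ (expR (- p) ^+ (#|u.1| * #|u.2|))).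
    apply: lerXn2r; rewrite ?nnegrE ?expR_ge0 //.
    by have := expR_ge1Dx (- p); rewrite addrC.
  rewrite -expRM_natl ler_expR natrM.
  have hd0 : 0 <= delta * n%:R / 2 by rewrite divr_ge0 // mulr_ge0 // ltW.
  have hab : (delta * n%:R / 2) ^+ 2 <= #|u.1|%:R * #|u.2|%:R.
    by rewrite expr2; apply: ler_pM => //; apply: ltW.
  by rewrite mulrN lerN2 [X in _ <= X]mulrC; apply: ler_wpM2l.
apply: (le_trans step1); rewrite sumr_const card_prod.
have hcard : #|{: {set 'I_n}}| = (2 ^ n)%N.
  by rewrite -cardsT -powersetT card_powerset cardsT card_ord.
rewrite hcard -expnMn -[c *+ _]mulr_natr natrX.
have h4 : 4 * n%:R <= p * (delta * n%:R / 2) ^+ 2.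
  have -> : p * (delta * n%:R / 2) ^+ 2 = (n%:R * p) * (delta ^+ 2 * n%:R / 4).
    by rewrite -!mulrA; field.
  have hd2 : 0 < delta ^+ 2 by rewrite exprn_gt0.
  apply: (@le_trans _ _ (16 / delta ^+ 2 * (delta ^+ 2 * n%:R / 4))).
    rewrite (_ : 16 / delta ^+ 2 * (delta ^+ 2 * n%:R / 4) = 4 * n%:R) //.
    by field; rewrite gt_eqF.
  by apply: ler_wpM2r => //; rewrite divr_ge0 // mulr_ge0 // ltW.
have hc : c <= expR (- 4) ^+ n.
  by rewrite /c -expRM_natl ler_expR; lra.
have he : expR (- 4) * 4 <= 4 / 5 :> R.
  have e5 : 5 <= expR (4 : R) by have := expR_ge1Dx (4 : R); lra.
  have e0 : 0 < expR (4 : R) by apply: expR_gt0.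
  rewrite expRN mulrC ler_pdivrMr //; lra.
apply: (@le_trans _ _ (expR (- 4) ^+ n * 4 ^+ n)).
  by apply: ler_wpM2r => //; rewrite exprn_ge0.
rewrite -exprMn; apply: lerXn2r; rewrite ?nnegrE ?mulr_ge0 ?expR_ge0 //.
Qed.

Local Open Scope classical_set_scope.

Theorem claim2p8 (R : realType) (delta : R) (p : nat -> R)
  (hdelta : 0 < delta)
  (hp : forall n, 0 <= p n <= 1)
  (homega : (fun n => n%:R * p n) @ \oo --> +oo) :
  (fun n => @gnp_prob R n (p n) (@matching_event R delta n)) @ \oo --> (1 : R).
Proof.
set g := fun n => _.
have h1 : (fun n => 1 - g n) @ \oo --> (0 : R).
  apply: (@squeeze_cvgr _ _ _ _ (fun _ => 0) (fun n => (4/5 : R) ^+ n)).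
  - move/cvgryPge: homega => /(_ (16 / delta ^+ 2)); apply: filterS => n hn.
    exact: key.
  - exact: cvg_cst.
  - by apply: cvg_expr; rewrite ger0_norm; lra.
have -> : g = (fun n => 1 - (1 - g n)) by apply/funext => n; rewrite opprB addrC subrK.
rewrite -[X in _ --> X](subr0 1).
apply: cvgB => //; exact: cvg_cst.
Qed.
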